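(* Let $i\geq1$ and let $m$ be an integer with $5\nmid m$ such that $m=N_i(f)$ for some $f\in\mathbb Z[x]$. Then $m=N_i(1+(x-1)^3h(x))$ for some $h\in\mathbb Z[x]$. For $i=1$, moreover, given such $h$, there is $g\in\mathbb Z[x]$ with $5m=N_1(1-x+5g(x))$, and $5\nmid g(1)$ if $5\nmid h(1)$.
   Context: For $k\geq1$, $\omega_k=e^{2\pi i/5^k}$ and $N_k(F)=\prod_{1\leq j\leq 5^k,\ 5\nmid j}F(\omega_k^j)$. *)

(* Defs.v *)
From HB Require Import structures.
From mathcomp Require Import all_boot all_order all_algebra all_field.
Set Implicit Arguments. Unset Strict Implicit. Unset Printing Implicit Defensive.
Import Order.TTheory GRing.Theory Num.Theory.
Local Open Scope ring_scope.

(* omega k = e^{2 pi i / 5^k}, realised in algC as the square of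
   (5^k).-root (-1) = e^{i pi / 5^k} (the n-th root with minimal
   non-negative argument). *)
Definition omega (k : nat) : algC := ((5 ^ k)%N.-root (-1)) ^+ 2.

Definition Nk (k : nat) (F : {poly int}) : algC :=
  \prod_(1 <= j < (5 ^ k).+1 | ~~ (5 %| j)%N)
     (map_poly (fun z : int => z%:~R) F).[omega k ^+ j].

(* Main.v *)
From HB Require Import structures.
From mathcomp Require Import all_boot all_order all_algebra all_field.
From mathcomp Require Import ring zify.
Require Import Defs.
Import Order.TTheory GRing.Theory Num.Theory.
Local Open Scope ring_scope.

Lemma conj_unit (y : algC) : `|y| = 1 -> y * y^* = 1.
Proof. by move=> h; rewrite -normCK h expr1n. Qed.

Lemma norm_unity (y : algC) (k : nat) : (0 < k)%N -> y ^+ k = 1 -> `|y| = 1.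
Proof.
move=> k0 h; apply/eqP; rewrite -(pexpr_eq1 k0 (normr_ge0 y)) -normrX h normr1 //.
Qed.

Lemma norm_unityN (y : algC) (k : nat) : (0 < k)%N -> y ^+ k = -1 -> `|y| = 1.
Proof.
move=> k0 h; apply/eqP; rewrite -(pexpr_eq1 k0 (normr_ge0 y)) -normrX h normrN normr1 //.
Qed.

Lemma sum5 (w : algC) : w ^+ 5 = 1 -> w != 1 -> 1 + w + w ^+ 2 + w ^+ 3 + w ^+ 4 = 0.
Proof.
move=> h5 h1.
have := subrX1 w 5; rewrite h5 subrr => /esym/eqP; rewrite mulf_eq0 subr_eq0 (negbTE h1) /=.
by rewrite !big_ord_recr big_ord0 /= add0r expr0 expr1 => /eqP.
Qed.

Lemma Pid (y c : algC) : y * c = 1 ->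
  (y + c) ^+ 2 * (y + c + 2) * (y + c - 1) =
  y ^+ 4 + c ^+ 4 + (y ^+ 3 + c ^+ 3) + 2 * (y ^+ 2 + c ^+ 2) + 3 * (y + c) + 2.
Proof.
move=> h.
have y0 : y != 0 by apply: contra_eq_neq h => ->; rewrite mul0r eq_sym oner_neq0.
have -> : c = y^-1 by rewrite -[c]mul1r -(mulVf y0) -mulrA h mulr1.
field; exact: y0.
Qed.

Lemma P5id (y c : algC) : y * c = 1 ->
  y ^+ 5 + c ^+ 5 = (y + c) ^+ 5 - 5 * (y + c) ^+ 3 + 5 * (y + c).
Proof.
move=> h.
have y0 : y != 0 by apply: contra_eq_neq h => ->; rewrite mul0r eq_sym oner_neq0.
have -> : c = y^-1 by rewrite -[c]mul1r -(mulVf y0) -mulrA h mulr1.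
field; exact: y0.
Qed.

Lemma realu (y : algC) : y + y^* \is Num.real.
Proof. by rewrite CrealE rmorphD /= conjCK addrC. Qed.

Lemma moment (s eta : algC) : `|s| = 1 -> 5.-primitive_root eta ->
  exists k : nat, 1 < s * eta ^+ k + (s * eta ^+ k)^*.
Proof.
move=> hs pe.
have e5 : eta ^+ 5 = 1 by exact: prim_expr_order.
have heta : `|eta| = 1 by apply: (@norm_unity eta 5 isT e5).
pose Y k := s * eta ^+ k.
have hY k : Y k * (Y k)^* = 1.
  by apply: conj_unit; rewrite /Y normrM normrX hs heta expr1n mulr1.
have Z j : (0 < j < 5)%N -> 1 + eta ^+ j + (eta ^+ j) ^+ 2 + (eta ^+ j) ^+ 3 + (eta ^+ j) ^+ 4 = 0.
  move=> /andP [j0 j5]; apply: sum5; first by rewrite exprAC e5 expr1n.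
  by rewrite -(prim_order_dvd pe); apply/negP => /(dvdn_leq j0); rewrite leqNgt j5.
have E j : (0 < j < 5)%N -> Y 0 ^+ j + Y 1 ^+ j + Y 2 ^+ j + Y 3 ^+ j + Y 4 ^+ j = 0.
  move=> hj; rewrite /Y !exprMn !(exprAC eta _ j) expr0 expr1 mulr1.
  set a := s ^+ j; set w := eta ^+ j.
  transitivity (a * (1 + w + w ^+ 2 + w ^+ 3 + w ^+ 4)); first by rewrite /w; ring.
  by rewrite Z // mulr0.
have Ec j : (0 < j < 5)%N -> (Y 0)^* ^+ j + (Y 1)^* ^+ j + (Y 2)^* ^+ j + (Y 3)^* ^+ j + (Y 4)^* ^+ j = 0.
  by move=> hj; rewrite -!rmorphXn -!rmorphD E //= conjC0.
case: (boolP [exists k : 'I_5, 1 < Y k + (Y k)^*]).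
  by case/existsP => k hk; exists k.
rewrite negb_exists => /forallP hall.
have hle k : (k < 5)%N -> Y k + (Y k)^* <= 1.
  move=> hk; have := hall (Ordinal hk); rewrite /= real_leNgt ?realu ?rpred1 //.
have hP k : (k < 5)%N -> (Y k + (Y k)^*) ^+ 2 * (Y k + (Y k)^* + 2) * (Y k + (Y k)^* - 1) <= 0.
  move=> hk; apply: mulr_ge0_le0; last by rewrite subr_le0 hle.
  apply: mulr_ge0; first by rewrite -realEsqr realu.
  have : `|Y k + (Y k)^*| <= 2.
    apply: le_trans (ler_normD _ _) _; rewrite norm_conjC.
    by rewrite /Y normrM normrX hs heta expr1n mulr1.
  by rewrite real_ler_norml ?realu // => /andP [h _]; rewrite -subr_ge0 opprK in h.
have hsum : \sum_(k < 5) (Y k + (Y k)^*) ^+ 2 * (Y k + (Y k)^* + 2) * (Y k + (Y k)^* - 1) = 10.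
  rewrite !big_ord_recr big_ord0 /= add0r !Pid ?hY //.
  have e1 := E 1%N isT; have e2 := E 2%N isT; have e3 := E 3%N isT; have e4 := E 4%N isT.
  have c1 := Ec 1%N isT; have c2 := Ec 2%N isT; have c3 := Ec 3%N isT; have c4 := Ec 4%N isT.
  rewrite !expr1 in e1 c1.
  move: e1 e2 e3 e4 c1 c2 c3 c4.
  set a0 := Y 0; set a1 := Y 1; set a2 := Y 2; set a3 := Y 3; set a4 := Y 4.
  set b0 := a0^*; set b1 := a1^*; set b2 := a2^*; set b3 := a3^*; set b4 := a4^*.
  move=> e1 e2 e3 e4 c1 c2 c3 c4.
  have -> : (10 : algC) = 10 + 0 + 0 + 0 + 0 + 2 * 0 + 2 * 0 + 3 * 0 + 3 * 0 by rewrite !mulr0 !addr0.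
  rewrite -{1}e4 -{1}c4 -{1}e3 -{1}c3 -{1}e2 -{1}c2 -{1}e1 -{1}c1.
  ring.
have : (10 : algC) <= 0.
  by rewrite -hsum; apply: sumr_le0 => k _; apply: hP.
by rewrite lern0.
Qed.

Lemma one_neqN1 : (1 : algC) != -1.
Proof. by rewrite -subr_eq0 opprK (_ : 1 + 1 = 2%:R) // pnatr_eq0. Qed.

Lemma rho_not (q : nat) : (0 < q)%N -> ((5 * q)%N.-root (-1 : algC)) ^+ q != -1.
Proof.
set n := (5 * q)%N; set r := n.-root (-1).
move=> q0; apply/negP => /eqP rq.
have n0 : (0 < n)%N by rewrite /n muln_gt0.
have rn : r ^+ n = -1 := rootCK n0 (-1).
have hr : `|r| = 1 := norm_unityN _ _ n0 rn.
have [eta pe] := C_prim_root_exists (isT : (0 < 5)%N).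
set s := 5.-root r.
have s5 : s ^+ 5 = r := @rootCK _ 5 isT r.
have hs : `|s| = 1.
  by apply/eqP; rewrite -(pexpr_eq1 (isT : (0 < 5)%N) (normr_ge0 s)) -normrX s5 hr.
have heta : `|eta| = 1 by apply: (@norm_unity eta 5 isT (prim_expr_order pe)).
have [k hk] := moment _ _ hs pe.
move: hk; set y := s * eta ^+ k => hk.
have hy : `|y| = 1 by rewrite /y normrM normrX hs heta expr1n mulr1.
have yc : y * y^* = 1 := conj_unit _ hy.
have y5 : y ^+ 5 = r by rewrite /y exprMn s5 exprAC (prim_expr_order pe) expr1n mulr1.
have yn : y ^+ n = -1 by rewrite /n exprM y5 rq.
move: hk; set u := y + y^* => hk.
have ur : u \is Num.real := realu y.
have u2 : u <= 2.
  apply: le_trans (real_ler_norm ur) _; apply: le_trans (ler_normD _ _) _.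
  by rewrite norm_conjC hy.
have u2' : u != 2.
  apply/eqP => e.
  have h0 : (y - 1) * (y^* - 1) = 0.
    have -> : (y - 1) * (y^* - 1) = y * y^* - u + 1 by rewrite /u; ring.
    by rewrite yc e; ring.
  have y1 : y = 1.
    move/eqP: h0; rewrite mulf_eq0 !subr_eq0 => /orP [/eqP //|/eqP e1].
    by rewrite -[y]conjCK e1 conjC1.
  by move: rq; rewrite -y5 y1 !expr1n => /eqP; rewrite (negbTE one_neqN1).
have ult2 : u < 2 by rewrite lt_neqAle u2' u2.
have u0 : 0 < u := lt_trans ltr01 hk.
have hlt : u ^+ 5 - 5 * u ^+ 3 + 5 * u < u.
  rewrite -subr_lt0.
  have -> : u ^+ 5 - 5 * u ^+ 3 + 5 * u - u = u * (u ^+ 2 - 1) * (u ^+ 2 - 4) by ring.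
  rewrite pmulr_rlt0 ?subr_lt0; last first.
    by rewrite mulr_gt0 // subr_gt0 exprn_egt1.
  rewrite (_ : (4 : algC) = 2 ^+ 2); last by rewrite expr2 -natrM.
  by rewrite ltr_pXn2r // ?qualifE ?ltW //= (ltW u0).
have hRe : 'Re y = u / 2 by rewrite ReE.
have hRer : 'Re r = (u ^+ 5 - 5 * u ^+ 3 + 5 * u) / 2.
  by rewrite ReE -y5 rmorphXn -(P5id _ _ yc).
have key : forall y' : algC, y' ^+ n = -1 -> 0 <= 'Im y' -> 'Re y' = 'Re y -> False.
  move=> y' yn' hI hR.
  have := rootC_Re_max n0 yn' hI; rewrite -/r hR hRe hRer.
  rewrite ler_pM2r ?invr_gt0 ?ltr0n //.
  by move=> h; have := lt_le_trans hlt h; rewrite ltxx.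
case: (boolP (0 <= 'Im y)) => hI; first exact: (key y yn hI).
apply: (key y^*); last exact: Re_conj.
  by rewrite -rmorphXn yn rmorphN1.
rewrite Im_conj oppr_ge0; apply: ltW; rewrite real_ltNge ?Creal_Im ?rpred0 //.
Qed.

Lemma omega_prim (i : nat) : (0 < i)%N -> (5 ^ i)%N.-primitive_root (omega i).
Proof.
case: i => // i' _; rewrite /omega expnS.
set q := (5 ^ i')%N; set n := (5 * q)%N; set r := n.-root (-1).
have q0 : (0 < q)%N by rewrite expn_gt0.
have n0 : (0 < n)%N by rewrite /n muln_gt0.
have rn : r ^+ n = -1 := rootCK n0 (-1).
have w1 : (r ^+ 2) ^+ n = 1 by rewrite exprAC rn expr2 mulN1r opprK.
have [d pd dn] := prim_order_exists n0 w1.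
have : (d %| 5 ^ i'.+1)%N by rewrite expnS.
case/(dvdn_pfactor _ _ (isT : prime 5)) => m hm Ed.
rewrite Ed in pd.
case: (ltngtP m i'.+1) => [hlt | hgt | e]; last first.
- by rewrite e expnS in pd.
- by move: hgt; rewrite ltnNge hm.
have hq : (r ^+ 2) ^+ q = 1.
  by apply/eqP; rewrite -(prim_order_dvd pd) dvdn_exp2l.
have hs : (r ^+ q - 1) * (r ^+ q + 1) = 0.
  by rewrite -subr_sqr -exprM mulnC exprM hq expr1n subrr.
move/eqP: hs; rewrite mulf_eq0 subr_eq0 addr_eq0 => /orP [/eqP e | /eqP e].
  by move: rn; rewrite /n mulnC exprM e expr1n => /eqP; rewrite (negbTE one_neqN1).
by move: (rho_not q q0); rewrite -/n -/r e eqxx.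
Qed.
Definition ev (z : algC) (F : {poly int}) : algC := (map_poly (fun x : int => x%:~R) F).[z].
Lemma evM z F G : ev z (F * G) = ev z F * ev z G.
Proof. by rewrite /ev rmorphM hornerM. Qed.
Lemma evD z F G : ev z (F + G) = ev z F + ev z G.
Proof. by rewrite /ev rmorphD hornerD. Qed.
Lemma evB z F G : ev z (F - G) = ev z F - ev z G.
Proof. by rewrite /ev rmorphB hornerD hornerN. Qed.
Lemma evN z F : ev z (- F) = - ev z F.
Proof. by rewrite /ev rmorphN hornerN. Qed.
Lemma ev1 z : ev z 1 = 1.
Proof. by rewrite /ev rmorph1 hornerC. Qed.
Lemma evXp z F k : ev z (F ^+ k) = ev z F ^+ k.
Proof. by rewrite /ev rmorphXn horner_exp. Qed.
Lemma evX z : ev z 'X = z.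
Proof. by rewrite /ev map_polyX hornerX. Qed.
Lemma evn z k : ev z k%:R = k%:R.
Proof. by rewrite /ev rmorph_nat -polyC_natr hornerC. Qed.
Lemma evC z (c : int) : ev z c%:P = c%:~R.
Proof. by rewrite /ev map_polyC hornerC. Qed.
Definition evE := (evM, evD, evB, evN, ev1, evXp, evX, evn, evC).

Definition Nz (n : nat) (z : algC) (F : {poly int}) : algC :=
  \prod_(1 <= j < n.+1 | ~~ (5 %| j)%N) ev (z ^+ j) F.

Lemma Nk_Nz i F : Nk i F = Nz (5 ^ i) (omega i) F.
Proof. by []. Qed.

Lemma NzM n z F G : Nz n z (F * G) = Nz n z F * Nz n z G.
Proof. by rewrite /Nz -big_split; apply: eq_bigr => j _; rewrite evM. Qed.

Lemma NzXp n z F k : Nz n z (F ^+ k) = Nz n z F ^+ k.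
Proof.
elim: k => [|k IH]; first by rewrite /Nz !expr0; apply: big1 => j _; rewrite ev1.
by rewrite !exprS NzM IH.
Qed.

Lemma tl (R : comNzRingType) (G : nat -> R) m :
  \prod_(m <= j < m + 5) G j = G m * G m.+1 * G m.+2 * G m.+3 * G m.+4.
Proof.
rewrite -{1}[m]add0n big_addn addKn big_mkord !big_ord_recr big_ord0 /= mul1r.
by rewrite !(addnC _ m) addn0 !addnS addn0.
Qed.

Lemma blk (R : comNzRingType) (G : nat -> R) q :
  \prod_(0 <= j < 5 * q.+1) G j =
  (\prod_(0 <= j < 5 * q) G j) *
  (G (5 * q)%N * G (5 * q).+1 * G (5 * q).+2 * G (5 * q).+3 * G (5 * q).+4).
Proof.
rewrite (@big_cat_nat _ _ _ (5 * q) 0 (5 * q.+1)) //=; last by lia.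
by rewrite mulnS addnC tl.
Qed.

Lemma nd5 q r : (0 < r < 5)%N -> ~~ (5 %| 5 * q + r)%N.
Proof. by move=> /andP [h1 h2]; rewrite dvdn_addr ?dvdn_mulr //; case: r h1 h2 => [|[|[|[|[|]]]]]. Qed.

Lemma prodS (R : comNzRingType) (F : nat -> R) q :
  \prod_(0 <= j < 5 * q.+1 | ~~ (5 %| j)%N) F j =
  (\prod_(0 <= j < 5 * q | ~~ (5 %| j)%N) F j) *
  (F (5 * q).+1 * F (5 * q).+2 * F (5 * q).+3 * F (5 * q).+4).
Proof.
rewrite !(big_mkcond (fun j => ~~ (5 %| j)%N)) blk; congr (_ * _).
have := nd5 q 1 isT; have := nd5 q 2 isT; have := nd5 q 3 isT; have := nd5 q 4 isT.
rewrite !addnS !addn0 => -> -> -> ->.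
by rewrite dvdn_mulr //= mul1r.
Qed.

Lemma prodM (R : comNzRingType) (F : nat -> R) q :
  \prod_(0 <= j < 5 * q.+1 | (5 %| j)%N) F j =
  (\prod_(0 <= j < 5 * q | (5 %| j)%N) F j) * F (5 * q)%N.
Proof.
rewrite !(big_mkcond (fun j => (5 %| j)%N)) blk; congr (_ * _).
have := nd5 q 1 isT; have := nd5 q 2 isT; have := nd5 q 3 isT; have := nd5 q 4 isT.
rewrite !addnS !addn0 => /negbTE -> /negbTE -> /negbTE -> /negbTE ->.
by rewrite dvdn_mulr //= !mulr1.
Qed.

Lemma prod_mult (R : comNzRingType) (F : nat -> R) q :
  \prod_(0 <= j < 5 * q | (5 %| j)%N) F j = \prod_(0 <= l < q) F (5 * l)%N.
Proof.
elim: q => [|q IH]; first by rewrite muln0 !big_geq.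
by rewrite prodM IH big_nat_recr.
Qed.

Lemma prodX (z : algC) q :
  \prod_(0 <= j < 5 * q | ~~ (5 %| j)%N) z ^+ j = z ^+ (10 * q * q).
Proof.
elim: q => [|q IH]; first by rewrite muln0 big_geq // muln0 expr0.
rewrite prodS IH -!exprD; congr (_ ^+ _); lia.
Qed.

Lemma rng (R : comNzRingType) (F : nat -> R) q :
  \prod_(1 <= j < (5 * q).+1 | ~~ (5 %| j)%N) F j =
  \prod_(0 <= j < 5 * q | ~~ (5 %| j)%N) F j.
Proof.
have h0 : \prod_(0 <= j < (5 * q).+1 | ~~ (5 %| j)%N) F j =
           \prod_(1 <= j < (5 * q).+1 | ~~ (5 %| j)%N) F j.
  by rewrite big_ltn_cond //= dvdn0.
rewrite -h0 big_mkcond big_nat_recr //= dvdn_mulr //= mulr1 -big_mkcond //.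
Qed.

Lemma NzX q z : z ^+ (5 * q) = 1 -> Nz (5 * q) z 'X = 1.
Proof.
move=> h; rewrite /Nz rng.
under eq_bigr => j _ do rewrite evX.
rewrite prodX (_ : (10 * q * q = 5 * q * (2 * q))%N); last by lia.
by rewrite exprM h expr1n.
Qed.

Lemma Phi_eq q (z : algC) : (0 < q)%N -> (5 * q).-primitive_root z ->
  \prod_(0 <= j < 5 * q | ~~ (5 %| j)%N) ('X - (z ^+ j)%:P) = \sum_(k < 5) ('X^q) ^+ k.
Proof.
move=> q0 pz.
have h1 := factor_Xn_sub_1 pz.
rewrite (bigID (fun j => (5 %| j)%N)) /= prod_mult in h1.
have pz5 : q.-primitive_root (z ^+ 5).
  by have := dvdn_prim_root pz (dvdn_mull 5 (dvdnn q)); rewrite mulnK.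
have h2 := factor_Xn_sub_1 pz5.
rewrite (eq_bigr (fun l => 'X - (z ^+ (5 * l))%:P)) in h2; last by move=> l _; rewrite exprM.
rewrite h2 in h1.
have h3 : ('X^q - 1) * \sum_(k < 5) ('X^q) ^+ k = 'X^(5 * q) - 1 :> {poly algC}.
  by rewrite -subrX1 -exprM mulnC.
apply: (@mulfI _ ('X^q - 1)); last by rewrite h1 h3.
by rewrite -size_poly_eq0 size_Xn_sub_1.
Qed.

Lemma prod1 q (z : algC) : (0 < q)%N -> (5 * q).-primitive_root z ->
  \prod_(0 <= j < 5 * q | ~~ (5 %| j)%N) (1 - z ^+ j) = 5.
Proof.
move=> q0 pz; have := congr1 (horner^~ 1) (Phi_eq _ _ q0 pz).
rewrite horner_prod horner_sum /=.
under eq_bigr => j _ do rewrite hornerXsubC.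
under [in X in _ = X -> _]eq_bigr => k _ do rewrite -exprM hornerXn expr1n.
by rewrite sumr_const card_ord.
Qed.

Lemma Nz1 q z : (0 < q)%N -> (5 * q).-primitive_root z -> Nz (5 * q) z (1 - 'X) = 5.
Proof.
move=> q0 pz; rewrite /Nz rng.
under eq_bigr => j _ do rewrite evB ev1 evX.
exact: prod1.
Qed.

Lemma NzXp1 q z : (0 < q)%N -> (5 * q).-primitive_root z -> coprime 2 (5 * q) ->
  Nz (5 * q) z (1 + 'X) = 1.
Proof.
move=> q0 pz c2.
have pz2 : (5 * q).-primitive_root (z ^+ 2) by rewrite prim_root_exp_coprime.
have e : Nz (5 * q) z (1 - 'X ^+ 2) = Nz (5 * q) (z ^+ 2) (1 - 'X).
  by rewrite /Nz; apply: eq_bigr => j _; rewrite !evE exprAC.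
have e2 : (1 + 'X) * (1 - 'X) = 1 - 'X ^+ 2 :> {poly int} by ring.
move: e; rewrite -e2 NzM !Nz1 // => h.
apply: (@mulIf _ 5); first by rewrite pnatr_eq0.
by rewrite h mul1r.
Qed.

Lemma Nz_eq i' z F G : (5 * 5 ^ i').-primitive_root z ->
  (forall w, (5 * 5 ^ i').-primitive_root w -> ev w F = ev w G) ->
  Nz (5 * 5 ^ i') z F = Nz (5 * 5 ^ i') z G.
Proof.
move=> pz H; apply: eq_bigr => j hj; apply: H.
rewrite prim_root_exp_coprime // -expnS coprime_pexpr // coprime_sym prime_coprime //.
Qed.

Lemma ev_sum z n (F : nat -> {poly int}) : ev z (\sum_(k < n) F k) = \sum_(k < n) ev z (F k).
Proof. by rewrite /ev rmorph_sum horner_sum. Qed.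

Definition Bfun {R : comNzRingType} (t : R) : R :=
  - t + t ^+ 2 * (2 + 2 * t + t ^+ 2) - t ^+ 3 * (2 + 2 * t + t ^+ 2) ^+ 2
  - 5 * (2 + 2 * t + t ^+ 2) ^+ 3.

Lemma ev_Bfun z t : ev z (Bfun t) = Bfun (ev z t).
Proof. by rewrite /Bfun !evE. Qed.

Lemma Bfun_key (eta : algC) : 1 + eta + eta ^+ 2 + eta ^+ 3 + eta ^+ 4 = 0 ->
  5 = (eta - 1) ^+ 3 * Bfun (eta - 1).
Proof.
move=> h; apply/eqP; rewrite -subr_eq0; apply/eqP.
have -> : 5 - (eta - 1) ^+ 3 * Bfun (eta - 1) =
  (1 + eta + eta ^+ 2 + eta ^+ 3 + eta ^+ 4) *
  (1 - (eta - 1) * (2 + 2 * (eta - 1) + (eta - 1) ^+ 2)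
     + (eta - 1) ^+ 2 * (2 + 2 * (eta - 1) + (eta - 1) ^+ 2) ^+ 2).
  by rewrite /Bfun; ring.
by rewrite h mul0r.
Qed.



Lemma prim5_sum i' (w : algC) : (5 * 5 ^ i').-primitive_root w ->
  1 + w ^+ (5 ^ i') + (w ^+ (5 ^ i')) ^+ 2 + (w ^+ (5 ^ i')) ^+ 3 + (w ^+ (5 ^ i')) ^+ 4 = 0.
Proof.
move=> pw.
have p5 : 5.-primitive_root (w ^+ (5 ^ i')).
  by have := dvdn_prim_root pw (dvdn_mulr (5 ^ i') (dvdnn 5)); rewrite mulKn.
apply: sum5; first exact: prim_expr_order.
by rewrite -[X in X != 1]expr1 -(prim_order_dvd p5).
Qed.

Lemma five_ev i' : exists T : {poly int}, forall w : algC, (5 * 5 ^ i').-primitive_root w ->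
  5 = (w - 1) ^+ 3 * ev w T.
Proof.
set q := (5 ^ i')%N.
exists ((\sum_(k < q) 'X ^+ k : {poly int}) ^+ 3 * Bfun ('X ^+ q - 1)).
move=> w pw.
rewrite evM evXp ev_sum ev_Bfun evB evXp evX ev1.
rewrite {1}(Bfun_key _ (prim5_sum _ _ pw)) subrX1.
have -> : \sum_(k < q) ev w ('X ^+ k) = \sum_(k < q) w ^+ k by apply: eq_bigr => k _; rewrite evXp evX.
by rewrite exprMn mulrA.
Qed.

Lemma ev_Aint n (w : algC) F : (0 < n)%N -> w ^+ n = 1 -> ev w F \in Aint.
Proof.
move=> n0 wn; rewrite /ev horner_coef; apply: rpred_sum => i _.
rewrite coef_map /=; apply: rpredM; first exact: Aint_int.
apply: rpredX; apply: (Aint_unity_root n0); exact/unity_rootP.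
Qed.

Lemma Nz_Aint n (z : algC) F : (0 < n)%N -> z ^+ n = 1 -> Nz n z F \in Aint.
Proof.
move=> n0 zn; apply: rpred_prod => j _; apply: (ev_Aint _ _ _ n0).
by rewrite exprAC zn expr1n.
Qed.

Lemma div5 i' (z : algC) (m : int) (F : {poly int}) :
  (5 * 5 ^ i').-primitive_root z -> Nz (5 * 5 ^ i') z F = m%:~R ->
  (5 %| F.[1])%Z -> (5 %| m)%Z.
Proof.
move=> pz hm /dvdzP [c hc].
have q0 : (0 < 5 ^ i')%N by rewrite expn_gt0.
have : root (F - (F.[1])%:P) 1 by rewrite rootE hornerD hornerN hornerC subrr.
case/factor_theorem => G hG.
have [T hT] := five_ev i'.
pose H := - (('X - 1) ^+ 2 * T * c%:P + G).
have e : Nz (5 * 5 ^ i') z F = Nz (5 * 5 ^ i') z ((1 - 'X) * H).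
  apply: Nz_eq => // w pw.
  have -> : F = F.[1]%:P + G * ('X - 1%:P) by rewrite -hG addrC subrK.
  rewrite hc /H !evE intrM (_ : (5 : int)%:~R = 5 :> algC) // {1}(hT w pw); ring.
rewrite e NzM Nz1 // in hm.
have hA : Nz (5 * 5 ^ i') z H \in Aint.
  by apply: (Nz_Aint _ _ _ _ (prim_expr_order pz)); rewrite muln_gt0.
have hQ : Nz (5 * 5 ^ i') z H \in Crat.
  have -> : Nz (5 * 5 ^ i') z H = m%:~R / 5.
    by rewrite -hm [5 * _]mulrC mulfK // pnatr_eq0.
  by rewrite rpred_div ?rpred_int ?rpred_nat.
have /intrP [k hk] := Cint_rat_Aint hQ hA.
rewrite hk in hm.
apply/dvdzP; exists k; apply: (@intr_inj algC).
by rewrite -hm rmorphM /= mulrC.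
Qed.

Local Notation tt := ('X - 1 : {poly int}).

Definition J (P : {poly int}) := exists Q R : {poly int}, P = tt ^+ 3 * Q + 5 * R.

Lemma J0 : J 0. Proof. by exists 0, 0; rewrite !mulr0 addr0. Qed.
Lemma JD P P' : J P -> J P' -> J (P + P').
Proof. by move=> [Q [R ->]] [Q' [R' ->]]; exists (Q + Q'), (R + R'); ring. Qed.
Lemma JM P G : J P -> J (P * G).
Proof. by move=> [Q [R ->]]; exists (Q * G), (R * G); ring. Qed.
Lemma JMl P G : J P -> J (G * P).
Proof. by rewrite mulrC; apply: JM. Qed.

Definition P3 (a : nat * nat * nat) : {poly int} :=
  a.1.1%:R + a.1.2%:R * tt + a.2%:R * tt ^+ 2.

Definition cong F a := J (F - P3 a).

Definition mul3 (a b : nat * nat * nat) : nat * nat * nat :=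
  let: (a0, a1, a2) := a in let: (b0, b1, b2) := b in
  ((a0 * b0) %% 5, (a0 * b1 + a1 * b0) %% 5, (a0 * b2 + a1 * b1 + a2 * b0) %% 5)%N.

Definition pw3 (a : nat * nat * nat) k := iter k (mul3 a) (1, 0, 0)%N.

Lemma Jred d0 r0 d1 r1 d2 r2 :
  J (P3 (d0 * 5 + r0, d1 * 5 + r1, d2 * 5 + r2)%N - P3 (r0, r1, r2)).
Proof.
exists 0, (d0%:R + d1%:R * tt + d2%:R * tt ^+ 2).
rewrite /P3 /= !natrD !natrM; ring.
Qed.

Lemma cong_mul F G a b : cong F a -> cong G b -> cong (F * G) (mul3 a b).
Proof.
case: a => [[a0 a1] a2]; case: b => [[b0 b1] b2] hF hG.
rewrite /cong.
have e : F * G - P3 (mul3 (a0, a1, a2) (b0, b1, b2)) =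
  (F - P3 (a0, a1, a2)) * G + P3 (a0, a1, a2) * (G - P3 (b0, b1, b2)) +
  (P3 (a0, a1, a2) * P3 (b0, b1, b2) -
     P3 ((a0 * b0)%N, (a0 * b1 + a1 * b0)%N, (a0 * b2 + a1 * b1 + a2 * b0)%N)) +
  (P3 ((a0 * b0)%N, (a0 * b1 + a1 * b0)%N, (a0 * b2 + a1 * b1 + a2 * b0)%N) -
     P3 (mul3 (a0, a1, a2) (b0, b1, b2))).
  by ring.
rewrite e; apply: JD; last first.
  rewrite /mul3 {1}(divn_eq (a0 * b0) 5) {1}(divn_eq (a0 * b1 + a1 * b0) 5).
  rewrite {1}(divn_eq (a0 * b2 + a1 * b1 + a2 * b0) 5).
  exact: Jred.
apply: JD; last first.
  exists ((a1 * b2 + a2 * b1)%:R + (a2 * b2)%:R * tt), 0.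
  rewrite /P3 /= !natrD !natrM; ring.
by apply: JD; [apply: JM | apply: JMl].
Qed.

Lemma cong1 : cong 1 (1, 0, 0)%N.
Proof. by rewrite /cong /P3 /= !mul0r !addr0 subrr; exact: J0. Qed.

Lemma cong_pow F a k : cong F a -> cong (F ^+ k) (pw3 a k).
Proof.
move=> hF; elim: k => [|k IH]; first by rewrite expr0; exact: cong1.
by rewrite exprS /=; apply: cong_mul.
Qed.

Lemma congX : cong 'X (1, 1, 0)%N.
Proof. by rewrite /cong /P3 /= mul0r addr0 mul1r (_ : 'X - (1 + ('X - 1)) = 0); [exact: J0 | ring]. Qed.

Lemma congX1 : cong (1 + 'X) (2, 1, 0)%N.
Proof. by rewrite /cong /P3 /= mul0r addr0 mul1r (_ : 1 + 'X - (2 + ('X - 1)) = 0); [exact: J0 | ring]. Qed.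

Lemma fincheck : all (fun a0 => all (fun a1 => all (fun a2 =>
  has (fun p => has (fun b =>
     mul3 (mul3 (a0, a1, a2) (pw3 (1, 1, 0) p)) (pw3 (2, 1, 0) b) == (1, 0, 0))%N
   (iota 0 20)) (iota 0 5)) (iota 0 5)) (iota 0 5)) (iota 1 4).
Proof. by vm_compute. Qed.

Lemma find_units a0 a1 a2 : (0 < a0 < 5)%N -> (a1 < 5)%N -> (a2 < 5)%N ->
  exists p b, mul3 (mul3 (a0, a1, a2) (pw3 (1, 1, 0) p)) (pw3 (2, 1, 0) b) = (1, 0, 0)%N.
Proof.
move=> /andP [h0 h0'] h1 h2.
have m0 : a0 \in iota 1 4 by rewrite mem_iota; lia.
have m1 : a1 \in iota 0 5 by rewrite mem_iota; lia.
have m2 : a2 \in iota 0 5 by rewrite mem_iota; lia.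
have := allP (allP (allP fincheck a0 m0) a1 m1) a2 m2.
by case/hasP => p _ /hasP [b _ /eqP e]; exists p, b.
Qed.

Lemma er5 (c : int) : ((`|(c %% 5)%Z|%N)%:R : int) = (c %% 5)%Z.
Proof. by rewrite natz gez0_abs // modz_ge0. Qed.
Lemma ek5 (c : int) : (c%:P : {poly int}) = ((c %/ 5)%Z)%:P * 5 + (`|(c %% 5)%Z|%N)%:R.
Proof. by rewrite {1}(divz_eq c 5) polyCD polyCM -[X in _ = _ + X]polyC_natr er5 polyC_natr. Qed.
Lemma ltr5 (c : int) : (`|(c %% 5)%Z|%N < 5)%N.
Proof. have := ltz_pmod c (isT : (0 < 5 :> int)%R). rewrite -{1}[(c %% 5)%Z]gez0_abs ?modz_ge0 //. Qed.

Lemma step1 (g : {poly int}) : exists g', g = g.[1]%:P + ('X - 1) * g'.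
Proof.
have : root (g - (g.[1])%:P) 1 by rewrite rootE hornerD hornerN hornerC subrr.
case/factor_theorem => g' hg; exists g'.
by rewrite mulrC -polyC1 -hg addrC subrK.
Qed.

Lemma taylor3 (f : {poly int}) : exists c0 c1 c2 (G : {poly int}),
  f = c0%:P + c1%:P * ('X - 1) + c2%:P * ('X - 1) ^+ 2 + ('X - 1) ^+ 3 * G.
Proof.
have [g1 e1] := step1 f; have [g2 e2] := step1 g1; have [g3 e3] := step1 g2.
exists f.[1], g1.[1], g2.[1], g3.
by rewrite {1}e1 {1}e2 {1}e3; ring.
Qed.

Lemma part1 i' (m : int) (f : {poly int}) (z : algC) :
  (5 * 5 ^ i').-primitive_root z -> ~~ (5 %| m)%Z -> Nz (5 * 5 ^ i') z f = m%:~R ->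
  exists h : {poly int}, Nz (5 * 5 ^ i') z (1 + ('X - 1) ^+ 3 * h) = m%:~R.
Proof.
move=> pz hm hf.
have q0 : (0 < 5 ^ i')%N by rewrite expn_gt0.
have [c0 [c1 [c2 [G ef]]]] := taylor3 f.
have hc : cong f (`|(c0 %% 5)%Z|%N, `|(c1 %% 5)%Z|%N, `|(c2 %% 5)%Z|%N).
  rewrite /cong; exists G, (((c0 %/ 5)%Z)%:P + ((c1 %/ 5)%Z)%:P * ('X - 1) + ((c2 %/ 5)%Z)%:P * ('X - 1) ^+ 2).
  rewrite ef {1}(ek5 c0) {1}(ek5 c1) {1}(ek5 c2) /P3 /=; ring.
have r0pos : (0 < `|(c0 %% 5)%Z|%N)%N.
  rewrite lt0n; apply/negP => /eqP h0.
  have d5 : (5 %| f.[1])%Z.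
    have -> : f.[1] = c0.
      rewrite ef !(hornerD, hornerM, horner_exp, hornerN, hornerX, hornerC) subrr. by rewrite !(mulr0, mul0r, addr0).
    apply/dvdzP; exists (c0 %/ 5)%Z.
    by rewrite {1}(divz_eq c0 5) -[(c0 %% 5)%Z]er5 h0 addr0.
  by move: hm; rewrite (div5 _ _ _ _ pz hf d5).
have [p [b hpb]] := find_units _ _ _
  (introT andP (conj r0pos (ltr5 c0))) (ltr5 c1) (ltr5 c2).
have hc' := cong_mul _ _ _ _ (cong_mul _ _ _ _ hc (cong_pow _ _ p congX)) (cong_pow _ _ b congX1).
rewrite hpb /cong /P3 /= !mul0r !addr0 in hc'.
case: hc' => Q [R hQR].
have [T hT] := five_ev i'.
exists (Q + T * R).
rewrite -hf.
transitivity (Nz (5 * 5 ^ i') z (f * 'X ^+ p * (1 + 'X) ^+ b)); last first.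
  rewrite !NzM !NzXp NzX ?(prim_expr_order pz) // NzXp1 //; last first.
    by rewrite -expnS coprime_pexpr.
  by rewrite !expr1n !mulr1.
apply: Nz_eq => // w pw.
have -> : f * 'X ^+ p * (1 + 'X) ^+ b = 1 + ('X - 1) ^+ 3 * Q + 5 * R.
  by rewrite -addrA -hQR addrC subrK.
rewrite !evE (hT w pw); ring.
Qed.

Lemma part2 (m : int) (z : algC) (h : {poly int}) :
  (5 * 5 ^ 0).-primitive_root z -> Nz (5 * 5 ^ 0) z (1 + ('X - 1) ^+ 3 * h) = m%:~R ->
  exists g : {poly int},
    Nz (5 * 5 ^ 0) z (1 - 'X + 5%:P * g) = (5 * m)%:~R /\
    (~~ (5 %| h.[1])%Z -> ~~ (5 %| g.[1])%Z).
Proof.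
move=> pz hh.
pose g := h * (1 + ('X - 1) * (2 + 2 * ('X - 1) + ('X - 1) ^+ 2)).
exists g; split; last first.
  have e1 : (1 : {poly int}).[1] = 1 by rewrite -polyC1 hornerC.
  have -> : g.[1] = h.[1] by rewrite /g hornerM hornerD hornerM hornerD hornerN hornerX e1 subrr mul0r addr0 mulr1.
  done.
rewrite intrM (_ : (5 : int)%:~R = 5 :> algC) // -hh.
rewrite -(Nz1 _ _ (isT : (0 < 5 ^ 0)%N) pz) -NzM.
apply: Nz_eq => // w pw.
have hs := prim5_sum _ _ pw; rewrite expr1 in hs.
apply/eqP; rewrite -subr_eq0; apply/eqP.
rewrite /g !evE (_ : (5 : int)%:~R = 5 :> algC) //.
transitivity (ev w h * (1 + w + w ^+ 2 + w ^+ 3 + w ^+ 4)); first by ring.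
by rewrite hs mulr0.
Qed.

Theorem lemma3p2 (i : nat) (m : int) :
  (1 <= i)%N -> ~~ (5 %| m)%Z ->
  (exists f : {poly int}, Nk i f = m%:~R) ->
  (exists h : {poly int}, Nk i (1 + ('X - 1) ^+ 3 * h) = m%:~R) /\
  (i = 1%N -> forall h : {poly int}, Nk 1 (1 + ('X - 1) ^+ 3 * h) = m%:~R ->
     exists g : {poly int},
       Nk 1 (1 - 'X + 5%:P * g) = (5 * m)%:~R /\
       (~~ (5 %| h.[1])%Z -> ~~ (5 %| g.[1])%Z)).
Proof.
move=> i1 hm [f hf]; split.
  case: i i1 hf => // i' _ hf.
  have pz := omega_prim _ (isT : (0 < i'.+1)%N).
  rewrite Nk_Nz expnS in hf pz.
  have [h hh] := part1 _ _ _ _ pz hm hf.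
  by exists h; rewrite Nk_Nz expnS.
move=> _ h hh.
have pz := omega_prim _ (isT : (0 < 1)%N).
exact: (part2 _ _ _ pz hh).
Qed.
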